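(* Let $C_0^2=3009$. Fix integers $1\le L_0\le K_0\le n$, integers $1\le L\le K\le n$, and a constant $s_0>0$. Let $$\mathcal S=\Big\{P\in\mathcal N(n,K,L):\ \|P-P_*\|_F\ge C_0\,2^{s_0}\sqrt{\tau(n,K_0,L_0)}\Big\}.$$ Then $$\mathbb P\Big\{\sup_{P\in\mathcal S}\Big[2\langle\Xi,P-P_*\rangle-\tfrac12\|P-P_*\|_F^2-2\Delta(n,K,L)\Big]\ge 0\Big\}\le\log_2 n\cdot\exp\big(-n\cdot 2^{2s_0-7}\big).$$
   Context: Network model: $n\ge 2$ nodes; $P_*\in[0,1]^{n\times n}$ is symmetric; $A\in\{0,1\}^{n\times n}$ is symmetric with entries $A_{ij}$, $1\le i\le j\le n$, independent, $A_{ij}\sim\mathrm{Bernoulli}((P_* )_{ij})$, and $A_{ji}=A_{ij}$. Notation: - $\Xi=A-P_*$. - $\langle M,N\rangle=\mathrm{Tr}(M^TN)$. - $\tau(n,K,L)=n\ln K+K\ln L+(K^2+2nL)\ln(9nL)$. - $\Delta(n,K,L)=C_0^2\,\tau(n,K,L)+n$. Nested Block Model class: for integers $1\le L\le K\le n$, $\mathcal N(n,K,L)$ is the set of matrices $P\in[0,1]^{n\times n}$ for which there exist a clustering function $z:\{1,\dots,n\}\to\{1,\dots,K\}$, a clustering function $c:\{1,\dots,K\}\to\{1,\dots,L\}$, a matrix $B\in[0,1]^{K\times K}$ and a matrix $H\in\mathbb R_+^{n\times L}$ such that, with $n_k=\#\{i:z(i)=k\}$, $$\sum_{i:\,z(i)=k}H_{i,l}=n_k\quad\text{for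 all }k\le K,\ l\le L,$$ and $$P_{ij}=B_{z(i),z(j)}\,H_{i,c(z(j))}\,H_{j,c(z(i))}\quad\text{for all }i,j.$$ *)

(* Defs.v *)
From Stdlib Require Import Reals ClassicalEpsilon.
From mathcomp Require Import all_boot.
Set Implicit Arguments. Unset Strict Implicit. Unset Printing Implicit Defensive.
Open Scope R_scope.

Definition mat (n : nat) := 'I_n -> 'I_n -> R.

Definition msub n (M N : mat n) : mat n := fun i j => M i j - N i j.

Definition frob n (M : mat n) : R :=
  sqrt (\big[Rplus/0]_(i : 'I_n) \big[Rplus/0]_(j : 'I_n) (M i j * M i j)).

Definition inner n (M N : mat n) : R :=
  \big[Rplus/0]_(i : 'I_n) \big[Rplus/0]_(j : 'I_n) (M i j * N i j).

Definition in_NBM (n K L : nat) (P : mat n) : Prop :=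
  (forall i j, 0 <= P i j <= 1) /\
  exists (z : 'I_n -> 'I_K) (c : 'I_K -> 'I_L)
         (B : 'I_K -> 'I_K -> R) (H : 'I_n -> 'I_L -> R),
    (forall k l, 0 <= B k l <= 1) /\
    (forall i l, 0 <= H i l) /\
    (forall (k : 'I_K) (l : 'I_L),
        \big[Rplus/0]_(i : 'I_n | z i == k) H i l = INR #|[pred i | z i == k]|) /\
    (forall i j, P i j = B (z i) (z j) * H i (c (z j)) * H j (c (z i))).

Definition tauNBM (n K L : nat) : R :=
  INR n * ln (INR K) + INR K * ln (INR L)
  + (INR K * INR K + 2 * INR n * INR L) * ln (9 * INR n * INR L).

Definition C0sq : R := 3009.
Definition C0 : R := sqrt C0sq.

Definition DeltaNBM (n K L : nat) : R := C0sq * tauNBM n K L + INR n.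

(* Sample space: the independent upper-triangular entries A_ij, i <= j.
   A sample is a boolean function on pairs whose strictly-lower entries are
   fixed to false (canonical representative). *)
Definition sample (n : nat) := {ffun 'I_n * 'I_n -> bool}.

Definition canonical_sample n (a : sample n) : bool :=
  [forall i : 'I_n, forall j : 'I_n, (j < i)%N ==> ~~ a (i, j)].

Definition adj n (a : sample n) : mat n := fun i j =>
  if (i <= j)%N then (if a (i, j) then 1 else 0)
  else (if a (j, i) then 1 else 0).

Definition bern (p : R) (b : bool) : R := if b then p else 1 - p.

Definition weight n (Ps : mat n) (a : sample n) : R :=
  \big[Rmult/1]_(i : 'I_n) \big[Rmult/1]_(j : 'I_n | (i <= j)%N)
     bern (Ps i j) (a (i, j)).

Definition prob n (Ps : mat n) (E : mat n -> Prop) : R :=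
  \big[Rplus/0]_(a : sample n | canonical_sample a)
     (if excluded_middle_informative (E (adj a)) then weight Ps a else 0).

(* sup_{P in S} f P >= 0  (sup over a possibly empty set, -infinity if empty):
   literally, for every eps > 0 some P in S has f P > -eps. *)
Definition sup_ge0 n (S : mat n -> Prop) (f : mat n -> R) : Prop :=
  forall eps, 0 < eps -> exists P, S P /\ f P > - eps.

Definition log2 (x : R) : R := ln x / ln 2.

(* Main.v *)
Require Import Defs.
From Stdlib Require Import Reals Lra Lia Psatz Classical ClassicalEpsilon ZArith.
From HB Require Import structures.
From mathcomp Require Import all_boot.
Open Scope R_scope.
Set Implicit Arguments. Unset Strict Implicit. Unset Printing Implicit Defensive.

Lemma RplusA : associative Rplus. Proof. move=> x y z; ring. Qed.
Lemma RmultA : associative Rmult. Proof. move=> x y z; ring. Qed.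
HB.instance Definition _ := Monoid.isComLaw.Build R 0 Rplus RplusA Rplus_comm Rplus_0_l.
HB.instance Definition _ := Monoid.isComLaw.Build R 1 Rmult RmultA Rmult_comm Rmult_1_l.
HB.instance Definition _ := Monoid.isMulLaw.Build R 0 Rmult Rmult_0_l Rmult_0_r.
Lemma RmultDl : left_distributive Rmult Rplus. Proof. move=> x y z; ring. Qed.
Lemma RmultDr : right_distributive Rmult Rplus. Proof. move=> x y z; ring. Qed.
HB.instance Definition _ := Monoid.isAddLaw.Build R Rmult Rplus RmultDl RmultDr.


Section Sums.
Variable I : finType.

Lemma sumR_le (P : pred I) (F G : I -> R) :
  (forall i, P i -> F i <= G i) -> \big[Rplus/0]_(i | P i) F i <= \big[Rplus/0]_(i | P i) G i.
Proof. move=> h; apply: (big_ind2 (fun x y => x <= y)) => //; [lra | move=> *; lra]. Qed.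

Lemma sumR_ge0 (P : pred I) (F : I -> R) :
  (forall i, P i -> 0 <= F i) -> 0 <= \big[Rplus/0]_(i | P i) F i.
Proof. move=> h; apply: (big_ind (fun x => 0 <= x)) => //; [lra | move=> *; lra]. Qed.

Lemma sum_constR (c : R) : \big[Rplus/0]_(i : I) c = INR #|I| * c.
Proof.
rewrite big_const; elim: #|I| => [|k IH]; first by rewrite /=; lra.
rewrite iterS IH S_INR; lra.
Qed.

Lemma prodR_le (P : pred I) (F G : I -> R) :
  (forall i, P i -> 0 <= F i <= G i) ->
  0 <= \big[Rmult/1]_(i | P i) F i <= \big[Rmult/1]_(i | P i) G i.
Proof.
move=> h; apply: (big_ind2 (fun x y => 0 <= x <= y)) => //; first lra.
move=> x1 x2 y1 y2 [h1 h2] [h3 h4]; split; first by apply Rmult_le_pos.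
apply Rmult_le_compat; lra.
Qed.

Lemma sum_le_single (P : pred I) (F : I -> R) j :
  P j -> (forall i, P i -> 0 <= F i) -> F j <= \big[Rplus/0]_(i | P i) F i.
Proof.
move=> Pj h; rewrite (bigD1 j Pj) /=.
have : 0 <= \big[Rplus/0]_(i | P i && (i != j)) F i.
  by apply: sumR_ge0 => i /andP [] /h.
lra.
Qed.

End Sums.

Lemma dsum_le n (F G : 'I_n -> 'I_n -> R) a b :
  0 <= a -> (forall i j, F i j <= a * G i j + b) ->
  \big[Rplus/0]_(i : 'I_n) \big[Rplus/0]_(j : 'I_n) F i j <=
  a * (\big[Rplus/0]_(i : 'I_n) \big[Rplus/0]_(j : 'I_n) G i j) + INR n * INR n * b.
Proof.
move=> ha h.
apply: Rle_trans (_ : _ <= \big[Rplus/0]_(i : 'I_n) \big[Rplus/0]_(j : 'I_n) (a * G i j + b)) _.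
  by apply: sumR_le => i _; apply: sumR_le => j _; apply: h.
rewrite big_distrr /=.
have -> : \big[Rplus/0]_(i : 'I_n) \big[Rplus/0]_(j : 'I_n) (a * G i j + b) =
   \big[Rplus/0]_(i : 'I_n) (a * \big[Rplus/0]_(j : 'I_n) G i j + INR n * b).
  apply: eq_bigr => i _; rewrite big_split /= big_distrr /= sum_constR card_ord //.
rewrite big_split /= sum_constR card_ord; lra.
Qed.

Definition pswap n (p : 'I_n * 'I_n) : 'I_n * 'I_n := (p.2, p.1).
Lemma pswapK n : involutive (@pswap n). Proof. by case. Qed.

Lemma pair_decomp n (phi : 'I_n -> 'I_n -> R) :
  \big[Rplus/0]_(i : 'I_n) \big[Rplus/0]_(j : 'I_n) phi i j =
  \big[Rplus/0]_(p : 'I_n * 'I_n | (p.1 <= p.2)%N)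
     (phi p.1 p.2 + (if p.1 == p.2 then 0 else phi p.2 p.1)).
Proof.
rewrite pair_big /= (bigID (fun p : 'I_n * 'I_n => (p.1 <= p.2)%N)) /=.
rewrite big_split /=; congr (_ + _).
rewrite (reindex_inj (inv_inj (@pswapK n))) /=.
rewrite big_mkcond [in RHS]big_mkcond /=; apply: eq_bigr => [[i j]] _ /=.
rewrite -val_eqE /=.
by case: ltngtP.
Qed.

Lemma weight_pair n (Ps : mat n) (a : sample n) :
  weight Ps a = \big[Rmult/1]_(p : 'I_n * 'I_n | (p.1 <= p.2)%N) bern (Ps p.1 p.2) (a p).
Proof. by rewrite /weight pair_big_dep /=; apply: eq_bigr => [[i j]]. Qed.

Lemma factor n (G : 'I_n * 'I_n -> bool -> R) :
  \big[Rplus/0]_(a : sample n | canonical_sample a)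
     \big[Rmult/1]_(p : 'I_n * 'I_n | (p.1 <= p.2)%N) G p (a p)
  = \big[Rmult/1]_(p : 'I_n * 'I_n | (p.1 <= p.2)%N) (G p true + G p false).
Proof.
pose G' (p : 'I_n * 'I_n) (b : bool) := if (p.1 <= p.2)%N then G p b else (if b then 0 else 1).
have -> : \big[Rmult/1]_(p : 'I_n * 'I_n | (p.1 <= p.2)%N) (G p true + G p false)
   = \big[Rmult/1]_(p : 'I_n * 'I_n) \big[Rplus/0]_(b : bool) G' p b.
  rewrite big_mkcond /=; apply: eq_bigr => p _; rewrite big_bool /G' /=.
  by case: ifP => _ //; lra.
rewrite bigA_distr_bigA /= [in RHS](bigID (@canonical_sample n)) /=.
rewrite [X in _ = _ + X]big1 ?Rplus_0_r.
  apply eq_bigr => a can; rewrite [in LHS]big_mkcond /=; apply: eq_bigr => p _.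
  rewrite /G'; case: ifP => // hle.
  move/forallP: can => /(_ p.1) /forallP /(_ p.2).
  rewrite ltnNge hle /= => /negbTE.
  by case: p hle => i j /= _ ->.
move=> a /forallPn [i] /forallPn [j]; rewrite negb_imply negbK => /andP [hji hij].
rewrite (bigD1 (i, j)) //= /G' /= leqNgt hji /= hij; lra.
Qed.

Lemma exp_le x y : x <= y -> exp x <= exp y.
Proof. case/Rle_lt_or_eq_dec => [h|->]; [left; exact: exp_increasing | lra]. Qed.

Lemma ln_le' x y : 0 < x -> x <= y -> ln x <= ln y.
Proof. move=> hx; case/Rle_lt_or_eq_dec => [h|->]; [left; exact: ln_increasing | lra]. Qed.

Lemma exp_quad y : y <= / 2 -> exp y <= 1 + y + 2 * y ^ 2.
Proof.
move=> hy.
have h1 := exp_ineq1_le (- y).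
have hpos : 0 < 1 - y by lra.
have he : exp y = / exp (- y) by rewrite exp_Ropp Rinv_inv.
rewrite he.
apply: Rle_trans (_ : _ <= / (1 - y)) _.
  apply: Rinv_le_contravar => //; lra.
apply: (Rmult_le_reg_l (1 - y)) => //.
rewrite Rinv_r; last lra.
have : 0 <= y ^ 2 * (1 - 2 * y) by apply: Rmult_le_pos; nra.
nra.
Qed.

Definition xi (q : R) (b : bool) : R := (if b then 1 else 0) - q.

Lemma mgf_pair q u : 0 <= q <= 1 -> Rabs u <= / 2 ->
  bern q true * exp (u * xi q true) + bern q false * exp (u * xi q false)
  <= exp (2 * u ^ 2).
Proof.
move=> hq hu; rewrite /bern /xi.
have hu' : - / 2 <= u <= / 2 by split_Rabs; lra.
have e1 := @exp_quad (u * (1 - q)) ltac:(nra).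
have e2 := @exp_quad (u * (0 - q)) ltac:(nra).
have e3 := exp_ineq1_le (2 * u ^ 2).
have : q * exp (u * (1 - q)) <= q * (1 + u * (1 - q) + 2 * (u * (1 - q)) ^ 2)
  by apply: Rmult_le_compat_l; lra.
have : (1 - q) * exp (u * (0 - q)) <= (1 - q) * (1 + u * (0 - q) + 2 * (u * (0 - q)) ^ 2)
  by apply: Rmult_le_compat_l; lra.
have : 0 <= u ^ 2 * (q * q) by nra.
nra.
Qed.

Definition cc n (D : mat n) (p : 'I_n * 'I_n) : R :=
  D p.1 p.2 + (if p.1 == p.2 then 0 else D p.2 p.1).

Definition dsq n (M : mat n) : R :=
  \big[Rplus/0]_(i : 'I_n) \big[Rplus/0]_(j : 'I_n) (M i j * M i j).

Lemma inner_decomp n (Ps D : mat n) (a : sample n) :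
  (forall i j, Ps i j = Ps j i) ->
  inner (msub (adj a) Ps) D =
  \big[Rplus/0]_(p : 'I_n * 'I_n | (p.1 <= p.2)%N) (cc D p * xi (Ps p.1 p.2) (a p)).
Proof.
move=> hs; rewrite /inner pair_decomp; apply: eq_bigr => [[i j]] /= hle.
rewrite /cc /msub /adj /xi /= hle.
case: (eqVneq i j) => [<-|hne].
  ring.
have -> : (j <= i)%N = false.
  apply/negbTE; rewrite -ltnNge ltn_neqAle hle andbT.
  by apply: contra hne => /eqP h; apply/eqP/val_inj.
rewrite (hs j i); ring.
Qed.

Lemma sq_decomp n (D : mat n) :
  \big[Rplus/0]_(p : 'I_n * 'I_n | (p.1 <= p.2)%N) (cc D p ^ 2) <= 2 * dsq D.
Proof.
rewrite /dsq pair_decomp big_distrr /=; apply: sumR_le => [[i j]] _ /=.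
rewrite /cc /=; have := Rle_0_sqr (D i j - D j i); have := Rle_0_sqr (D i j); case: (i == j); rewrite /Rsqr; nra.
Qed.

Lemma exp_sum (I : finType) (P : pred I) (F : I -> R) :
  exp (\big[Rplus/0]_(i | P i) F i) = \big[Rmult/1]_(i | P i) exp (F i).
Proof. apply: (big_morph exp exp_plus exp_0). Qed.

Lemma weight_ge0 n (Ps : mat n) a : (forall i j, 0 <= Ps i j <= 1) -> 0 <= weight Ps a.
Proof.
move=> hr; rewrite weight_pair; apply: (big_ind (fun x => 0 <= x)); try lra.
  by move=> x y; apply: Rmult_le_pos.
move=> [i j] _; rewrite /bern /=; have [h1 h2] := hr i j; case: (a (i, j)); lra.
Qed.

Lemma cc_bound n (D : mat n) p : (forall i j, Rabs (D i j) <= 2) -> Rabs (cc D p) <= 4.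
Proof.
move=> hD; rewrite /cc; apply: Rle_trans (Rabs_triang _ _) _.
have := hD p.1 p.2; have := hD p.2 p.1; case: (p.1 == p.2); rewrite ?Rabs_R0; lra.
Qed.

Lemma chernoff n (Ps D : mat n) (s lam : R) :
  (forall i j, Ps i j = Ps j i) -> (forall i j, 0 <= Ps i j <= 1) ->
  0 <= lam <= / 8 -> (forall i j, Rabs (D i j) <= 2) ->
  prob Ps (fun A => inner (msub A Ps) D >= s) <= exp (- (lam * s) + 4 * lam ^ 2 * dsq D).
Proof.
move=> hs hr hl hD; rewrite /prob.
pose G (p : 'I_n * 'I_n) (b : bool) :=
  bern (Ps p.1 p.2) b * exp (lam * (cc D p * xi (Ps p.1 p.2) b)).
apply: Rle_trans (_ : _ <= \big[Rplus/0]_(a : sample n | canonical_sample a)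
   (exp (- (lam * s)) * \big[Rmult/1]_(p : 'I_n * 'I_n | (p.1 <= p.2)%N) G p (a p))) _.
  apply: sumR_le => a _.
  have hw := weight_ge0 a hr.
  have hprod : \big[Rmult/1]_(p : 'I_n * 'I_n | (p.1 <= p.2)%N) G p (a p)
      = weight Ps a * exp (lam * inner (msub (adj a) Ps) D).
    rewrite /G big_split /= -weight_pair -exp_sum -big_distrr /= -inner_decomp //.
  rewrite hprod.
  case: excluded_middle_informative => h /=.
    rewrite -Rmult_assoc (Rmult_comm _ (weight Ps a)) Rmult_assoc -exp_plus.
    have := exp_ineq1_le (- (lam * s) + lam * inner (msub (adj a) Ps) D).
    have : 0 <= lam * (inner (msub (adj a) Ps) D - s) by apply: Rmult_le_pos; lra.
    move=> h1 h2.
    have : 1 <= exp (- (lam * s) + lam * inner (msub (adj a) Ps) D) by lra.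
    move=> h3; nra.
  apply: Rmult_le_pos; [left; apply: exp_pos | apply: Rmult_le_pos => //; left; apply: exp_pos].
rewrite -big_distrr /= factor.
rewrite exp_plus; apply: Rmult_le_compat_l; first by left; apply: exp_pos.
apply: Rle_trans (_ : _ <= \big[Rmult/1]_(p : 'I_n * 'I_n | (p.1 <= p.2)%N)
     exp (2 * (lam * cc D p) ^ 2)) _.
  apply: (proj2 (prodR_le _)) => [[i j]] _; split.
    rewrite /G /bern /=; have [h1 h2] := hr i j.
    set e1 := exp _; set e2 := exp _.
    have : 0 < e1 by apply: exp_pos.
    have : 0 < e2 by apply: exp_pos.
    nra.
  have hm : Rabs (lam * cc D (i, j)) <= / 2.
    rewrite Rabs_mult Rabs_pos_eq; last lra.
    have := cc_bound (i, j) hD; have := Rabs_pos (cc D (i, j)); nra.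
  have := mgf_pair (hr i j) hm.
  rewrite /G /bern /= -!Rmult_assoc; exact.
rewrite -exp_sum; apply: exp_le.
apply: Rle_trans (_ : _ <= 2 * lam ^ 2 * \big[Rplus/0]_(p : 'I_n * 'I_n | (p.1 <= p.2)%N) (cc D p ^ 2)) _.
  rewrite big_distrr /=; apply: Req_le; apply: eq_bigr => p _; ring.
have := sq_decomp D; have : 0 <= lam ^ 2 by nra.
move=> h1 h2; nra.
Qed.

Lemma quant x step N : 0 <= x -> 0 < step -> x <= INR N * step ->
  exists k : 'I_N.+1, INR k * step <= x /\ x < INR k * step + step.
Proof.
move=> hx hs hN.
have [h1 h2] := base_Int_part (x / step).
have hxs : 0 <= x / step by apply: Rmult_le_pos => //; left; apply: Rinv_0_lt_compat.
have hz : (0 <= Int_part (x / step))%Z.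
  have : (-1 < Int_part (x / step))%Z by apply: lt_IZR; lra.
  lia.
set k := Z.to_nat (Int_part (x / step)).
have hk : INR k = IZR (Int_part (x / step)) by rewrite INR_IZR_INZ /k Z2Nat.id.
have e : x = x / step * step by field; lra.
have hkx : INR k * step <= x by rewrite e; apply: Rmult_le_compat_r; lra.
have hkN : (k < N.+1)%N.
  rewrite ltnS; apply/leP; apply: INR_le.
  apply: (Rmult_le_reg_r step) => //; lra.
exists (Ordinal hkN) => /=; split => //.
rewrite e; have : x / step < INR k + 1 by lra.
move=> h; nra.
Qed.

Lemma prod_approx b b' h1 h1' h2 h2' beta eta N :
  0 <= b' <= b -> b <= 1 -> b - b' <= beta ->
  0 <= h1' <= h1 -> h1 <= N -> h1 - h1' <= eta ->
  0 <= h2' <= h2 -> h2 <= N -> h2 - h2' <= eta ->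
  Rabs (b * h1 * h2 - b' * h1' * h2') <= beta * N ^ 2 + 2 * N * eta.
Proof.
move=> hb hb1 hbb hh1 hN1 he1 hh2 hN2 he2.
have e : b * h1 * h2 - b' * h1' * h2' = (b - b') * (h1 * h2) + b' * ((h1 - h1') * h2) + b' * h1' * (h2 - h2') by ring.
have t1 : 0 <= (b - b') * (h1 * h2) <= beta * N ^ 2.
  split; first by apply: Rmult_le_pos; nra.
  apply: Rmult_le_compat; try nra.
have t2 : 0 <= b' * ((h1 - h1') * h2) <= N * eta.
  split; first by apply: Rmult_le_pos; nra.
  have : (h1 - h1') * h2 <= eta * N by apply: Rmult_le_compat; lra.
  have : 0 <= (h1 - h1') * h2 by apply: Rmult_le_pos; lra.
  nra.
have t3 : 0 <= b' * h1' * (h2 - h2') <= N * eta.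
  split; first by apply: Rmult_le_pos; nra.
  have : b' * h1' <= 1 * N by apply: Rmult_le_compat; lra.
  have : 0 <= b' * h1' by nra.
  nra.
rewrite e Rabs_pos_eq; lra.
Qed.

Lemma INR_muln a b : INR (a * b)%N = INR a * INR b.
Proof. by rewrite -mult_INR. Qed.

Lemma INR_expn a k : INR (a ^ k)%N = INR a ^ k.
Proof.
elim: k => [|k IH]; first by rewrite expn0 /=.
by rewrite expnS INR_muln IH /=.
Qed.

Definition M1 n := (2 * n ^ 4)%N.
Definition M2 n := (4 * n ^ 4)%N.
Definition betaq n := / (2 * INR n ^ 4).
Definition etaq n := / (4 * INR n ^ 3).

Notation Tpar n K L := (({ffun 'I_n -> 'I_K} * {ffun 'I_K -> 'I_L}) *
   ({ffun 'I_K * 'I_K -> 'I_(M1 n).+1} * {ffun 'I_n * 'I_L -> 'I_(M2 n).+1}))%type.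

Definition Qm n K L (t : Tpar n K L) : mat n := fun i j =>
  (INR (t.2.1 (t.1.1 i, t.1.1 j)) * betaq n) *
  (INR (t.2.2 (i, t.1.2 (t.1.1 j))) * etaq n) *
  (INR (t.2.2 (j, t.1.2 (t.1.1 i))) * etaq n).

Lemma approx n K L (P : mat n) : (1 <= n)%N -> in_NBM K L P ->
  exists t : Tpar n K L, forall i j, Rabs (P i j - Qm t i j) <= / (INR n ^ 2).
Proof.
move=> hn [_ [z [c [B [H [hB [hH [hsum hP]]]]]]]].
have hn0 : 0 < INR n by apply: lt_0_INR; apply/ltP.
have hHn : forall i l, H i l <= INR n.
  move=> i l.
  apply: Rle_trans (_ : _ <= \big[Rplus/0]_(i' : 'I_n | z i' == z i) H i' l) _.
    by apply: (sum_le_single (P := fun i' => z i' == z i)) => // i' _.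
  rewrite hsum; apply: le_INR; apply/leP.
  by apply: leq_trans (max_card _) _; rewrite card_ord.
have hbeta : 0 < betaq n by apply: Rinv_0_lt_compat; have := pow_lt _ 4 hn0; lra.
have heta : 0 < etaq n by apply: Rinv_0_lt_compat; have := pow_lt _ 3 hn0; lra.
have hexB : forall p : 'I_K * 'I_K, exists k : 'I_(M1 n).+1,
    INR k * betaq n <= B p.1 p.2 /\ B p.1 p.2 < INR k * betaq n + betaq n.
  move=> p; apply: quant => //; first by have := hB p.1 p.2; lra.
  rewrite /M1 INR_muln INR_expn /betaq /=; rewrite Rinv_r; first by have := hB p.1 p.2; lra.
  have := pow_lt _ 4 hn0; lra.
have hexH : forall p : 'I_n * 'I_L, exists k : 'I_(M2 n).+1,
    INR k * etaq n <= H p.1 p.2 /\ H p.1 p.2 < INR k * etaq n + etaq n.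
  move=> p; apply: quant => //.
  rewrite /M2 INR_muln INR_expn /etaq (_ : INR 4 = 4); last by simpl; lra.
  have -> : 4 * INR n ^ 4 * / (4 * INR n ^ 3) = INR n.
    field; lra.
  exact: hHn.
have [kB hkB] := fin_all_exists hexB.
have [kH hkH] := fin_all_exists hexH.
exists (([ffun i => z i], [ffun k => c k]), ([ffun p => kB p], [ffun p => kH p])) => i j.
rewrite /Qm /= !ffunE hP.
have e : / INR n ^ 2 = betaq n * INR n ^ 2 + 2 * INR n * etaq n.
  rewrite /betaq /etaq; field; lra.
rewrite e.
have [b1 b2] := hkB (z i, z j).
have [h1 h2] := hkH (i, c (z j)).
have [h3 h4] := hkH (j, c (z i)).
simpl in b1, b2, h1, h2, h3, h4.
apply: prod_approx.
- split; last lra.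
  apply: Rmult_le_pos; [apply: pos_INR | lra].
- by have := hB (z i) (z j); lra.
- lra.
- split; last lra.
  apply: Rmult_le_pos; [apply: pos_INR | lra].
- exact: hHn.
- lra.
- split; last lra.
  apply: Rmult_le_pos; [apply: pos_INR | lra].
- exact: hHn.
- lra.
Qed.

Lemma card_T n K L : INR #|{: Tpar n K L}| =
  INR K ^ n * INR L ^ K * (2 * INR n ^ 4 + 1) ^ (K * K) * (4 * INR n ^ 4 + 1) ^ (n * L).
Proof.
rewrite !(card_prod, card_ffun, card_ord) !INR_muln !INR_expn /M1 /M2 !S_INR ?INR_muln ?INR_expn.
rewrite -Rmult_assoc; congr (_ * _ ^ _ * _ ^ _); simpl; ring.
Qed.

Lemma INR_pos_of k : (1 <= k)%N -> 1 <= INR k.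
Proof. by move=> h; rewrite -/(INR 1); apply: le_INR; apply/leP. Qed.

Lemma card_T_pos n K L : (1 <= n)%N -> (1 <= L)%N -> (1 <= K)%N -> 0 < INR #|{: Tpar n K L}|.
Proof.
move=> hn hL hK; rewrite card_T.
have := INR_pos_of hn; have := INR_pos_of hL; have := INR_pos_of hK.
move=> h1 h2 h3.
repeat apply: Rmult_lt_0_compat; apply: pow_lt; try lra;
  have := pow_lt _ 4 (ltac:(lra) : 0 < INR n); lra.
Qed.

Lemma ln_card n K L : (1 <= n)%N -> (1 <= L)%N -> (1 <= K)%N ->
  ln (INR #|{: Tpar n K L}|) <= 4 * tauNBM n K L.
Proof.
move=> hn hL hK; rewrite card_T.
have hN := INR_pos_of hn; have hLL := INR_pos_of hL; have hKK := INR_pos_of hK.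
set N := INR n in hN *; set LL := INR L in hLL *; set KK := INR K in hKK *.
have hN4 : 1 <= N ^ 4 by apply: pow_R1_Rle.
have hL4 : 1 <= LL ^ 4 by apply: pow_R1_Rle.
have h9 : 0 < 9 * N * LL by nra.
have e9 : (9 * N * LL) ^ 4 = 6561 * N ^ 4 * LL ^ 4 by ring.
have hb : 4 * N ^ 4 + 1 <= (9 * N * LL) ^ 4 by rewrite e9; nra.
have hl : ln (4 * N ^ 4 + 1) <= 4 * ln (9 * N * LL).
  have -> : 4 * ln (9 * N * LL) = INR 4 * ln (9 * N * LL) by simpl; ring.
  rewrite -(@ln_pow _ h9); apply: ln_le' => //; lra.
have hl' : ln (2 * N ^ 4 + 1) <= 4 * ln (9 * N * LL).
  apply: Rle_trans hl; apply: ln_le'; lra.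
have hl0 : 0 <= ln (9 * N * LL).
  rewrite -ln_1; apply: ln_le'; nra.
have hlK : 0 <= ln KK by rewrite -ln_1; apply: ln_le'; lra.
have hlL : 0 <= ln LL by rewrite -ln_1; apply: ln_le'; lra.
have pa : 0 < 2 * N ^ 4 + 1 by lra.
have pb : 0 < 4 * N ^ 4 + 1 by lra.
rewrite !ln_mult; try (apply: pow_lt; lra); try (apply: Rmult_lt_0_compat; apply: pow_lt; lra);
  try (repeat apply: Rmult_lt_0_compat; apply: pow_lt; lra).
rewrite !ln_pow; try lra.
rewrite !INR_muln -/N -/KK -/LL /tauNBM -/N -/KK -/LL.
have t1 : KK * KK * ln (2 * N ^ 4 + 1) <= KK * KK * (4 * ln (9 * N * LL)).
  apply: Rmult_le_compat_l => //; nra.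
have t2 : N * LL * ln (4 * N ^ 4 + 1) <= N * LL * (4 * ln (9 * N * LL)).
  apply: Rmult_le_compat_l => //; nra.
have t3 : 0 <= N * ln KK by nra.
have t4 : 0 <= KK * ln LL by nra.
have t5 : 0 <= N * LL * ln (9 * N * LL) by apply: Rmult_le_pos => //; nra.
lra.
Qed.

Lemma prob_le_of n (Ps : mat n) (E F : mat n -> Prop) :
  (forall i j, 0 <= Ps i j <= 1) ->
  (forall a : sample n, E (adj a) -> F (adj a)) -> prob Ps E <= prob Ps F.
Proof.
move=> hr h; rewrite /prob; apply: sumR_le => a _.
have hw := weight_ge0 a hr.
case: excluded_middle_informative => h1 /=; case: excluded_middle_informative => h2 //=; try lra.
by case: h2; apply: h.
Qed.

Lemma prob_ge0 n (Ps : mat n) (E : mat n -> Prop) :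
  (forall i j, 0 <= Ps i j <= 1) -> 0 <= prob Ps E.
Proof.
move=> hr; rewrite /prob; apply: sumR_ge0 => a _.
have hw := weight_ge0 a hr; case: excluded_middle_informative => //= _; lra.
Qed.

Lemma prob_zero n (Ps : mat n) (E : mat n -> Prop) :
  (forall a : sample n, ~ E (adj a)) -> prob Ps E = 0.
Proof.
move=> h; rewrite /prob; apply: big1 => a _.
by case: excluded_middle_informative => //= /h.
Qed.

Lemma prob_union n (Ps : mat n) (T : finType) (E : mat n -> Prop) (Et : T -> mat n -> Prop) :
  (forall i j, 0 <= Ps i j <= 1) ->
  (forall a : sample n, E (adj a) -> exists t, Et t (adj a)) ->
  prob Ps E <= \big[Rplus/0]_(t : T) prob Ps (Et t).
Proof.
move=> hr h; rewrite /prob exchange_big /=; apply: sumR_le => a _.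
have hw := weight_ge0 a hr.
case: excluded_middle_informative => h1 /=.
  have [t ht] := h a h1.
  apply: Rle_trans (sum_le_single (P := fun _ => true) (F := fun t => if excluded_middle_informative (Et t (adj a)) then weight Ps a else 0) (j := t) _ _) => //.
    case: excluded_middle_informative => /= h2; [lra | by case: h2].
  by move=> t' _; case: excluded_middle_informative => //= _; lra.
apply: sumR_ge0 => t _; case: excluded_middle_informative => //= _; lra.
Qed.

Lemma prob_Et n (Ps Q : mat n) (Dl r : R) :
  (forall i j, Ps i j = Ps j i) -> (forall i j, 0 <= Ps i j <= 1) ->
  prob Ps (fun A => r <= dsq (msub Q Ps) /\ (forall i j, Rabs (msub Q Ps i j) <= 2) /\
                    inner (msub A Ps) (msub Q Ps) >= (dsq (msub Q Ps) / 4 + 2 * Dl - 4) / 2)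
  <= exp (- (r / 1024) - (Dl - 2) / 64).
Proof.
move=> hs hr.
case: (classic (r <= dsq (msub Q Ps) /\ (forall i j, Rabs (msub Q Ps i j) <= 2))) => [[h1 h2]|hn].
  apply: Rle_trans (prob_le_of (F := fun A => inner (msub A Ps) (msub Q Ps) >=
       (dsq (msub Q Ps) / 4 + 2 * Dl - 4) / 2) hr _) _.
    by move=> a [_ [_ h]].
  apply: Rle_trans (@chernoff n Ps (msub Q Ps) ((dsq (msub Q Ps) / 4 + 2 * Dl - 4) / 2) (/ 64) hs hr _ h2) _; first lra.
  apply: exp_le; lra.
rewrite prob_zero; first by left; apply: exp_pos.
by move=> a [h1 [h2 _]]; apply: hn.
Qed.

Lemma dsq_ge0 n (M : mat n) : 0 <= dsq M.
Proof. apply: sumR_ge0 => i _; apply: sumR_ge0 => j _; apply: Rle_0_sqr. Qed.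

Lemma abs_sq v e : Rabs v <= e -> v * v <= e * e.
Proof. move=> h; have h0 := Rabs_pos v; split_Rabs; nra. Qed.

Lemma abs_mul_le u v e : Rabs u <= 1 -> Rabs v <= e -> u * v <= e.
Proof.
move=> hu hv; apply: Rle_trans (Rle_abs _) _; rewrite Rabs_mult.
have := Rabs_pos u; have := Rabs_pos v; nra.
Qed.

Lemma sq_split u v e : v * v <= e * e -> (u + - v) * (u + - v) <= 2 * (u * u) + 2 * e ^ 2.
Proof. move=> h; have := Rle_0_sqr (u + v); rewrite /Rsqr; nra. Qed.

Lemma log2_ge1 n : (2 <= n)%N -> 1 <= log2 (INR n).
Proof.
move=> hn; rewrite /log2.
have h2 : 2 <= INR n by rewrite (_ : 2 = INR 2); [apply: le_INR; apply/leP | simpl; lra].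
have hl2 : 0 < ln 2 by rewrite -ln_1; apply: ln_increasing; lra.
have : ln 2 <= ln (INR n) by apply: ln_le'; lra.
move=> h; apply: (Rmult_le_reg_r (ln 2)) => //.
rewrite Rmult_1_l Rmult_assoc Rinv_l; lra.
Qed.

Lemma tau_ge0 n K L : (1 <= n)%N -> (1 <= K)%N -> (1 <= L)%N -> 0 <= tauNBM n K L.
Proof.
move=> hn hK hL; rewrite /tauNBM.
have hN := INR_pos_of hn; have hLL := INR_pos_of hL; have hKK := INR_pos_of hK.
have h1 : 0 <= ln (INR K) by rewrite -ln_1; apply: ln_le'; lra.
have h2 : 0 <= ln (INR L) by rewrite -ln_1; apply: ln_le'; lra.
have h3 : 0 <= ln (9 * INR n * INR L) by rewrite -ln_1; apply: ln_le'; nra.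
have : 0 <= INR K * INR K + 2 * INR n * INR L by nra.
move=> h4.
have := Rmult_le_pos _ _ h4 h3.
have := Rmult_le_pos _ _ (pos_INR n) h1.
have := Rmult_le_pos _ _ (pos_INR K) h2.
lra.
Qed.

Lemma tau_ge2n n K L : (1 <= n)%N -> (1 <= K)%N -> (1 <= L)%N -> 2 * INR n <= tauNBM n K L.
Proof.
move=> hn hK hL; rewrite /tauNBM.
have hN := INR_pos_of hn; have hLL := INR_pos_of hL; have hKK := INR_pos_of hK.
have h1 : 0 <= ln (INR K) by rewrite -ln_1; apply: ln_le'; lra.
have h2 : 0 <= ln (INR L) by rewrite -ln_1; apply: ln_le'; lra.
have h3 : 1 <= ln (9 * INR n * INR L).
  rewrite -{1}(ln_exp 1); apply: ln_le'; first by apply: exp_pos.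
  have := exp_le_3; nra.
have := Rmult_le_pos _ _ (pos_INR n) h1.
have := Rmult_le_pos _ _ (pos_INR K) h2.
have : INR K * INR K * 1 <= INR K * INR K * ln (9 * INR n * INR L)
  by apply: Rmult_le_compat_l; nra.
have : 2 * INR n * INR L * 1 <= 2 * INR n * INR L * ln (9 * INR n * INR L)
  by apply: Rmult_le_compat_l; nra.
nra.
Qed.

Theorem lemma4 (n K L K0 L0 : nat) (s0 : R) (Ps : mat n)
  (hn : (2 <= n)%N)
  (hL0 : (1 <= L0)%N) (hL0K0 : (L0 <= K0)%N) (hK0n : (K0 <= n)%N)
  (hL : (1 <= L)%N) (hLK : (L <= K)%N) (hKn : (K <= n)%N)
  (hs0 : 0 < s0)
  (hPs_sym : forall i j, Ps i j = Ps j i)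
  (hPs_range : forall i j, 0 <= Ps i j <= 1) :
  prob Ps (fun A =>
    sup_ge0
      (fun P => @in_NBM n K L P /\
         frob (msub P Ps) >= C0 * Rpower 2 s0 * sqrt (tauNBM n K0 L0))
      (fun P => 2 * inner (msub A Ps) (msub P Ps)
                - / 2 * (frob (msub P Ps)) ^ 2
                - 2 * DeltaNBM n K L))
  <= log2 (INR n) * exp (- (INR n * Rpower 2 (2 * s0 - 7))).
Proof.
have hn1 : (1 <= n)%N by apply: leq_trans hn.
have hK : (1 <= K)%N by apply: leq_trans hLK.
have hK0 : (1 <= K0)%N by apply: leq_trans hL0K0.
have hN2 : 2 <= INR n by rewrite (_ : 2 = INR 2); [apply: le_INR; apply/leP | simpl; lra].
set tau0 := tauNBM n K0 L0.
set Dl := DeltaNBM n K L.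
set dmin := C0 * Rpower 2 s0 * sqrt tau0.
set r := dmin * dmin / 2 - 1.
have htau0 : 2 * INR n <= tau0 by apply: tau_ge2n.
have hRp : forall y, 0 < Rpower 2 y by move=> y; rewrite /Rpower; apply: exp_pos.
have hdmin : 0 <= dmin.
  apply: Rmult_le_pos; last by apply: sqrt_pos.
  apply: Rmult_le_pos; [apply: sqrt_pos | left; apply: hRp].
set eps := / (INR n ^ 2).
have heps : 0 < eps by apply: Rinv_0_lt_compat; nra.
have hneps : INR n * INR n * eps = 1 by rewrite /eps; field; lra.
have hneps2 : INR n * INR n * (2 * eps ^ 2) <= / 2.
  rewrite /eps (_ : INR n * INR n * (2 * (/ INR n ^ 2) ^ 2) = 2 / (INR n * INR n)); last by field; lra.
  apply: (Rmult_le_reg_r (INR n * INR n)); first nra.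
  rewrite /Rdiv Rmult_assoc Rinv_l; nra.
have heps4 : eps <= / 4.
  rewrite /eps; apply: Rinv_le_contravar; nra.
pose Et (t : Tpar n K L) := fun A : mat n =>
  r <= dsq (msub (Qm t) Ps) /\ (forall i j, Rabs (msub (Qm t) Ps i j) <= 2) /\
  inner (msub A Ps) (msub (Qm t) Ps) >= (dsq (msub (Qm t) Ps) / 4 + 2 * Dl - 4) / 2.
apply: Rle_trans (prob_union (Et := Et) hPs_range _) _.
  move=> a hE.
  have [P [[hP hfrob] hf]] := hE 1 Rlt_0_1.
  have [t ht] := approx hn1 hP.
  exists t.
  have hPr := hP.1.
  set DP := msub P Ps; set DQ := msub (Qm t) Ps.
  have hfrob' : frob DP >= dmin := hfrob.
  have hf' : 2 * inner (msub (adj a) Ps) DP - / 2 * frob DP ^ 2 - 2 * Dl > - 1 := hf.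
  have hXi : forall i j, Rabs (adj a i j - Ps i j) <= 1.
    move=> i j; have := hPs_range i j; rewrite /adj.
    case: ifP => _; case: (a _) => [[h1 h2]|[h1 h2]]; split_Rabs; lra.
  have hfr : frob DP ^ 2 = dsq DP.
    by rewrite /frob /= Rmult_1_r sqrt_sqrt //; apply: dsq_ge0.
  have hdP : dmin * dmin <= dsq DP.
    rewrite -hfr /= Rmult_1_r; apply: Rmult_le_compat; lra.
  have i1 : dsq DQ <= 2 * dsq DP + INR n * INR n * (2 * eps ^ 2).
    apply: dsum_le; first lra.
    move=> i j; rewrite /DQ /DP /msub.
    have := abs_sq (ht i j).
    have -> : Qm t i j - Ps i j = (P i j - Ps i j) + - (P i j - Qm t i j) by ring.
    apply: sq_split.
  have i2 : dsq DP <= 2 * dsq DQ + INR n * INR n * (2 * eps ^ 2).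
    apply: dsum_le; first lra.
    move=> i j; rewrite /DQ /DP /msub.
    have := abs_sq (ht i j).
    have -> : P i j - Ps i j = (Qm t i j - Ps i j) + - (Qm t i j - P i j) by ring.
    move=> h; apply: sq_split.
    have -> : (Qm t i j - P i j) * (Qm t i j - P i j) = (P i j - Qm t i j) * (P i j - Qm t i j) by ring.
    exact: h.
  have i3 : inner (msub (adj a) Ps) DP <= 1 * inner (msub (adj a) Ps) DQ + INR n * INR n * eps.
    apply: dsum_le; first lra.
    move=> i j; rewrite /DQ /DP /msub.
    have := abs_mul_le (hXi i j) (ht i j).
    have -> : (adj a i j - Ps i j) * (P i j - Ps i j) = (adj a i j - Ps i j) * (Qm t i j - Ps i j) + (adj a i j - Ps i j) * (P i j - Qm t i j) by ring.
    rewrite /eps; lra.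
  split; first by rewrite /r -/DQ; lra.
  split.
    move=> i j; rewrite /DQ /msub.
    have := ht i j; have := hPr i j; have := hPs_range i j.
    move=> h1 h2 h3; have h4 : Rabs (P i j - Qm t i j) <= eps := h3; split_Rabs; lra.
  move: hf'; rewrite hfr -/DQ; lra.
apply: Rle_trans (_ : _ <= \big[Rplus/0]_(t : Tpar n K L) exp (- (r / 1024) - (Dl - 2) / 64)) _.
  apply: sumR_le => t _; exact: prob_Et.
rewrite sum_constR.
have hcard : INR #|{: Tpar n K L}| <= exp ((Dl - 2) / 64).
  rewrite -(exp_ln _ (card_T_pos hn1 hL hK)); apply: exp_le.
  apply: Rle_trans (ln_card hn1 hL hK) _.
  have := tau_ge0 hn1 hK hL; rewrite /Dl /DeltaNBM /C0sq; lra.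
have hx : 1 <= Rpower 2 (2 * s0).
  have := Rle_Rpower 2 0 (2 * s0) ltac:(lra) ltac:(lra); rewrite Rpower_O //; lra.
have hdd : dmin * dmin = 3009 * Rpower 2 (2 * s0) * tau0.
  rewrite /dmin /C0 /C0sq.
  have -> : 2 * s0 = s0 + s0 by ring.
  rewrite Rpower_plus.
  have e1 := sqrt_sqrt 3009 ltac:(lra).
  have e2 := sqrt_sqrt tau0 ltac:(lra).
  rewrite -{3}e1 -{3}e2. ring.
have h7 : Rpower 2 (2 * s0 - 7) = Rpower 2 (2 * s0) / 128.
  rewrite /Rminus Rpower_plus Rpower_Ropp (_ : 7 = INR 7); last by simpl; lra.
  rewrite Rpower_pow; last lra.
  simpl; field.
have hr : INR n * Rpower 2 (2 * s0 - 7) <= r / 1024.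
  rewrite h7 /r hdd.
  have : 2 * INR n * Rpower 2 (2 * s0) <= tau0 * Rpower 2 (2 * s0).
    apply: Rmult_le_compat_r; lra.
  nra.
have hlog := log2_ge1 hn.
apply: Rle_trans (_ : _ <= exp ((Dl - 2) / 64) * exp (- (r / 1024) - (Dl - 2) / 64)) _.
  apply: Rmult_le_compat_r => //; left; apply: exp_pos.
rewrite -exp_plus.
apply: Rle_trans (_ : _ <= exp (- (INR n * Rpower 2 (2 * s0 - 7)))) _.
  apply: exp_le; lra.
have := exp_pos (- (INR n * Rpower 2 (2 * s0 - 7))); nra.
Qed.
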